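(* Let $\mathcal{K}$ be a Hilbert space, let $A$ be a closable, densely defined operator in $\mathcal{K}$ with closure $\bar A$ and adjoint $A^*$, and let $A_0$ be an operator in $\mathcal{K}$ with $A_0\subseteq A^*$ (so $A_0$ is closable; $\bar A_0$ denotes its closure). Suppose there exists a sequence $(T_n)_{n=0}^\infty\subseteq\mathbf{B}(\mathcal{K})$ such that $T_n\to I_\mathcal{K}$ in the weak operator topology as $n\to\infty$, $$\mathcal{R}(T_n)\subseteq\mathcal{D}(\bar A),\qquad \mathcal{R}(T_n^* )\subseteq\mathcal{D}(\bar A_0),\qquad n\in\mathbb{N},$$ and $$\sup_{n\in\mathbb{N}}\|\bar AT_n-T_n\bar A\|<+\infty.$$ Then $\bar A_0=A^*$.
   Context: $\mathbf{B}(\mathcal{K})$ denotes the space of all bounded linear operators defined on the whole of $\mathcal{K}$. $\mathcal{D}(S)$ and $\mathcal{R}(S)$ denote the domain and range of an operator $S$. Sums and products of unbounded operators are taken with their natural (maximal) domains, e.g. $\mathcal{D}(\bar AT_n-T_n\bar A)=\{f\in\mathcal{D}(\bar A): T_nf\in\mathcal{D}(\bar A)\}$. For a (not necessarily everywhere defined) operator $S$, $\|S\|=\sup\{\|Sf\|: f\in\mathcal{D}(S),\ \|f\|\le 1\}$. *)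

(* Defs.v *)
From HB Require Import structures.
From mathcomp Require Import all_boot all_order all_algebra.
From mathcomp Require Import reals.
From mathcomp Require Export complex.
Set Implicit Arguments. Unset Strict Implicit. Unset Printing Implicit Defensive.
Import Order.TTheory GRing.Theory Num.Theory.
Local Open Scope ring_scope.

Section Hilbert.
Variables (R : realType) (V : lmodType R[i]) (ip : V -> V -> R[i]).

Definition cmod (z : R[i]) : R := Num.sqrt (complex.Re z ^+ 2 + complex.Im z ^+ 2).

(* complex inner product, linear in the first argument *)
Definition is_inner_product : Prop :=
  [/\ (forall a x y z, ip (a *: x + y) z = a * ip x z + ip y z),
      (forall x y, ip y x = conjc (ip x y)),
      (forall x, complex.Im (ip x x) = 0 /\ 0 <= complex.Re (ip x x)) &
      (forall x, ip x x = 0 -> x = 0)].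

Definition hnorm (x : V) : R := Num.sqrt (complex.Re (ip x x)).

Definition hcvg (u : nat -> V) (l : V) : Prop :=
  forall eps : R, 0 < eps -> exists N, forall n, (N <= n)%N -> hnorm (u n - l) < eps.

Definition hcauchy (u : nat -> V) : Prop :=
  forall eps : R, 0 < eps -> exists N, forall m n, (N <= m)%N -> (N <= n)%N ->
    hnorm (u m - u n) < eps.

Definition hcomplete : Prop := forall u, hcauchy u -> exists l, hcvg u l.

(* a (not necessarily everywhere defined) operator in V: domain + action;
   the action outside the domain is irrelevant *)
Record op := Op { dom : V -> Prop; app : V -> V }.

Definition linear_op (A : op) : Prop :=
  [/\ dom A 0,
      (forall x y, dom A x -> dom A y -> dom A (x + y) /\ app A (x + y) = app A x + app A y) &
      (forall a x, dom A x -> dom A (a *: x) /\ app A (a *: x) = a *: app A x)].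

Definition op_sub (A B : op) : Prop :=
  forall x, dom A x -> dom B x /\ app B x = app A x.

Definition op_eq (A B : op) : Prop := op_sub A B /\ op_sub B A.

Definition densely_defined (A : op) : Prop :=
  forall x eps, 0 < eps -> exists y, dom A y /\ hnorm (x - y) < eps.

Definition in_graph_closure (A : op) (x y : V) : Prop :=
  forall eps : R, 0 < eps -> exists u, dom A u /\ hnorm (x - u) < eps /\ hnorm (y - app A u) < eps.

(* B is the closure of A: graph(B) = closure of graph(A); the existence of such
   a B is exactly closability of A *)
Definition is_closure (A B : op) : Prop :=
  forall x y, (dom B x /\ app B x = y) <-> in_graph_closure A x y.

Definition is_adjoint (A B : op) : Prop :=
  forall y z, (dom B y /\ app B y = z) <-> (forall x, dom A x -> ip (app A x) y = ip x z).

Definition bounded_op (T : V -> V) : Prop :=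
  [/\ (forall x y, T (x + y) = T x + T y),
      (forall (a : R[i]) x, T (a *: x) = a *: T x) &
      exists M : R, forall x, hnorm (T x) <= M * hnorm x].
End Hilbert.

(* Main.v *)
Require Import Defs.
From HB Require Import structures.
From mathcomp Require Import all_boot all_order all_algebra.
From mathcomp Require Import reals complex.
From mathcomp Require Import ring lra boolp classical_sets.
Import Order.TTheory GRing.Theory Num.Theory.
Local Open Scope ring_scope.
Local Open Scope complex_scope.
Lemma subsub (V : zmodType) (a b c : V) : (a - b) - (a - c) = - (b - c).
Proof. by rewrite opprB addrC addrA subrK opprB. Qed.
Lemma subsub2 (V : zmodType) (a b c q : V) : (a - (b + q)) - ((a - c) - q) = - (b - c).
Proof. by rewrite opprD opprB !addrA subrK subsub. Qed.

Section IP.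
Variables (R : realType) (V : lmodType R[i]) (ip : V -> V -> R[i]).
Hypothesis Hip : is_inner_product ip.
Local Notation N := (hnorm ip).

Lemma cmodE (z : R[i]) : (cmod z)%:C = `|z|.
Proof. by rewrite normc_def. Qed.

Lemma cmod_ge0 (z : R[i]) : 0 <= cmod z.
Proof. by rewrite /cmod sqrtr_ge0. Qed.

Lemma cmodD (z w : R[i]) : cmod (z + w) <= cmod z + cmod w.
Proof. by rewrite -lecR rmorphD /= !cmodE ler_normD. Qed.

Lemma cmodM (z w : R[i]) : cmod (z * w) = cmod z * cmod w.
Proof. by apply: complexI; rewrite rmorphM /= !cmodE normrM. Qed.

Lemma cmodN (z : R[i]) : cmod (- z) = cmod z.
Proof. by apply: complexI; rewrite !cmodE normrN. Qed.

Lemma cmodJ (z : R[i]) : cmod (conjc z) = cmod z.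
Proof. by apply: complexI; rewrite !cmodE normcJ. Qed.

Lemma cmodR (r : R) : cmod r%:C = `|r|.
Proof. by rewrite /cmod /= expr0n /= addr0 sqrtr_sqr. Qed.

Lemma cmod0 : cmod (0:R[i]) = 0.
Proof. by rewrite (cmodR 0) normr0. Qed.

Lemma cmodB (z w : R[i]) : cmod (z - w) <= cmod z + cmod w.
Proof. by rewrite -(cmodN w) cmodD. Qed.

Lemma Re_le_cmod (z : R[i]) : complex.Re z <= cmod z.
Proof.
rewrite /cmod; apply: (le_trans (ler_norm _)).
rewrite -(sqrtr_sqr (complex.Re z)); apply: ler_wsqrtr; by rewrite lerDl sqr_ge0.
Qed.

Lemma cmod_eq0 (z : R[i]) : cmod z = 0 -> z = 0.
Proof. by move=> h; apply/eqP; rewrite -normr_eq0 -cmodE h. Qed.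

Lemma ip0l z : ip 0 z = 0.
Proof.
case: Hip => l _ _ _; have := l 1 0 0 z; rewrite scale1r addr0 mul1r.
by move=> h; apply: (addrI (ip 0 z)); rewrite addr0 -h.
Qed.

Lemma ipDl x y z : ip (x + y) z = ip x z + ip y z.
Proof. case: Hip => l _ _ _; by rewrite -[ip x z]mul1r -l scale1r. Qed.

Lemma ipZl a x z : ip (a *: x) z = a * ip x z.
Proof. by case: Hip => l _ _ _; rewrite -[a *: x]addr0 l ip0l addr0. Qed.

Lemma ipC x y : ip y x = conjc (ip x y).
Proof. by case: Hip. Qed.

Lemma ipNl x z : ip (- x) z = - ip x z.
Proof. by rewrite -scaleN1r ipZl mulN1r. Qed.

Lemma ipBl x y z : ip (x - y) z = ip x z - ip y z.
Proof. by rewrite ipDl ipNl. Qed.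

Lemma ip0r z : ip z 0 = 0.
Proof. by rewrite ipC ip0l conjc0. Qed.

Lemma ipDr x y z : ip z (x + y) = ip z x + ip z y.
Proof. by rewrite ipC ipDl rmorphD /= -!ipC. Qed.

Lemma ipZr a x z : ip z (a *: x) = conjc a * ip z x.
Proof. by rewrite ipC ipZl rmorphM /= -ipC. Qed.

Lemma ipNr x z : ip z (- x) = - ip z x.
Proof. by rewrite ipC ipNl rmorphN /= -ipC. Qed.

Lemma ipBr x y z : ip z (x - y) = ip z x - ip z y.
Proof. by rewrite ipDr ipNr. Qed.

Lemma N_ge0 x : 0 <= N x.
Proof. by rewrite /hnorm sqrtr_ge0. Qed.

Lemma ipxx x : ip x x = (N x ^+ 2)%:C.
Proof.
case: Hip => _ _ p _; case: (p x) => hi hr.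
rewrite /hnorm sqr_sqrtr //; case: (ip x x) hi hr => a b /= -> _ //.
Qed.

Lemma N_eq0 x : N x = 0 -> x = 0.
Proof.
case: Hip => _ _ _ d h; apply: d; by rewrite ipxx h expr0n.
Qed.

Lemma N0 : N 0 = 0.
Proof.
have := ipxx 0; rewrite ip0l => /(congr1 (@complex.Re R)) /= /esym/eqP.
by rewrite sqrf_eq0 => /eqP.
Qed.

Lemma Nsq x : N x ^+ 2 = complex.Re (ip x x).
Proof. by rewrite ipxx. Qed.

Lemma cmod_sqr (z : R[i]) : (cmod z ^+ 2)%:C = z * conjc z.
Proof. by rewrite rmorphXn /= cmodE sqr_normc. Qed.

Lemma conjR (r : R) : conjc (r%:C) = r%:C.
Proof. by rewrite /conjc /= oppr0. Qed.

Lemma conjM (z w : R[i]) : conjc (z * w) = conjc z * conjc w.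
Proof. exact: rmorphM. Qed.

Lemma conjD (z w : R[i]) : conjc (z + w) = conjc z + conjc w.
Proof. exact: rmorphD. Qed.

Lemma conjN (z : R[i]) : conjc (- z) = - conjc z.
Proof. exact: rmorphN. Qed.

Lemma CS x y : cmod (ip x y) <= N x * N y.
Proof.
have [y0|ny0] := eqVneq (N y) 0.
  by rewrite (N_eq0 _ y0) ip0r cmod0 N0 mulr0.
have qgt0 : 0 < N y ^+ 2 by rewrite exprn_gt0 // lt_neqAle eq_sym ny0 N_ge0.
set p := ip x y; set q := N y ^+ 2.
pose a := p * (q^-1)%:C.
have key : (N (x - a *: y) ^+ 2)%:C = (N x ^+ 2 - cmod p ^+ 2 / q)%:C.
  rewrite -ipxx ipBl !ipBr !ipZl !ipZr ipxx (ipxx y) -/q (ipC x y) -/p.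
  rewrite /a conjM conjR.
  rewrite rmorphB /= [(cmod p ^+ 2 / q)%:C]rmorphM /= fmorphV /= cmod_sqr.
  have qC : q%:C != 0 by apply/eqP => /complexI /eqP; rewrite gt_eqF.
  field; exact: qC.
move/complexI: key => key.
have : 0 <= N x ^+ 2 - cmod p ^+ 2 / q by rewrite -key sqr_ge0.
rewrite subr_ge0 ler_pdivrMr // /q -exprMn => h.
have := cmod_ge0 p; have := N_ge0 x; have := N_ge0 y.
move: (N x) (N y) (cmod p) h => a0 b0 c0 h *.
rewrite -(ler_pXn2r (n := 2)) // ?nnegrE ?mulr_ge0 //.
Qed.

Lemma ReD (z w : R[i]) : complex.Re (z + w) = complex.Re z + complex.Re w.
Proof. by case: z; case: w. Qed.

Lemma ReJ (z : R[i]) : complex.Re (conjc z) = complex.Re z.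
Proof. by case: z. Qed.

Lemma sq_inj (a b : R) : 0 <= a -> 0 <= b -> a ^+ 2 = b ^+ 2 -> a = b.
Proof. by move=> ha hb h; rewrite -(ger0_norm ha) -(ger0_norm hb) -!sqrtr_sqr h. Qed.

Lemma NZ a x : N (a *: x) = cmod a * N x.
Proof.
apply: sq_inj; rewrite ?mulr_ge0 ?N_ge0 ?cmod_ge0 //.
apply: complexI; rewrite -ipxx ipZl ipZr ipxx exprMn [RHS]rmorphM /= cmod_sqr.
by rewrite mulrA [a * _]mulrC.
Qed.

Lemma NN x : N (- x) = N x.
Proof. by rewrite -scaleN1r NZ cmodN (cmodR 1) normr1 mul1r. Qed.

Lemma NB x y : N (x - y) = N (y - x).
Proof. by rewrite -NN opprB. Qed.

Lemma Nsq_expand x y :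
  N (x + y) ^+ 2 = N x ^+ 2 + N y ^+ 2 + 2 * complex.Re (ip x y).
Proof.
rewrite !Nsq ipDl !ipDr !ReD (ipC x y) ReJ; lra.
Qed.

Lemma ND x y : N (x + y) <= N x + N y.
Proof.
rewrite -(ler_pXn2r (n := 2)) ?nnegrE ?addr_ge0 ?N_ge0 //.
rewrite Nsq_expand; have := Re_le_cmod (ip x y); have := CS x y; lra.
Qed.

Lemma NBle x y : N (x - y) <= N x + N y.
Proof. by rewrite -(NN y) ND. Qed.

Lemma N_lip x y : `|N x - N y| <= N (x - y).
Proof.
have h1 := ND (x - y) y; have h2 := ND (y - x) x.
rewrite subrK in h1; rewrite subrK NB in h2.
rewrite ler_norml; lra.
Qed.

Lemma cmod_ge_diff (z w : R[i]) : cmod w - cmod z <= cmod (z + w).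
Proof. have := cmodB (z + w) z; rewrite addrC addKr; lra. Qed.

Lemma arch (x : R) : exists k : nat, x < k%:R.
Proof. by exists (Num.trunc x).+1; exact: truncnS_gt. Qed.

Hypothesis Hcompl : hcomplete ip.

Lemma ubp_step (w : nat -> V) :
  (forall z, exists K, forall n, cmod (ip (w n) z) <= K) ->
  (forall B, exists n, B < N (w n)) ->
  forall (k : nat) (c : V) (r : R), 0 < r -> exists c' r',
    [/\ 0 < r', r' <= r / 2, r' <= (k.+1%:R)^-1, N (c' - c) <= r / 2 &
      exists n, forall z, N (z - c') <= r' -> k%:R < cmod (ip (w n) z)].
Proof.
move=> hw unb k c r r0.
have [Kc hK] := hw c.
have [n hn] := unb (2 * (k%:R + `|Kc| + 1) / r).
set m := N (w n) in hn.
have m0 : 0 < m.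
  apply: le_lt_trans hn; rewrite divr_ge0 ?(ltW r0) // mulr_ge0 // addr_ge0 //.
  by rewrite addr_ge0.
have hn' : k%:R + `|Kc| + 1 < r / 2 * m.
  by move: hn; rewrite ltr_pdivrMr // => h; lra.
pose s := r / 2 / m.
exists (c + s%:C *: w n).
exists (Num.min (Num.min (r / 2) (k.+1%:R)^-1) (m + 1)^-1).
have m1 : 0 < m + 1 by lra.
split.
- by rewrite !lt_min divr_gt0 // !invr_gt0 // ltr0n.
- by rewrite !ge_min lexx.
- by rewrite !ge_min lexx orbT.
- rewrite addrC addKr NZ cmodR ger0_norm /s ?divr_ge0 ?(ltW r0) ?(ltW m0) //.
  by rewrite divfK // gt_eqF.
exists n => z hz.
have e1 : ip (w n) (c + s%:C *: w n) = ip (w n) c + (r / 2 * m)%:C.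
  rewrite ipDr ipZr conjR ipxx -rmorphM /=; congr (_ + _%:C).
  by rewrite /s -/m expr2 mulrA divfK // gt_eqF.
have e2 : cmod (ip (w n) z - ip (w n) (c + s%:C *: w n)) < 1.
  rewrite -ipBr; apply: (le_lt_trans (CS _ _)); rewrite -/m.
  have h3 : N (z - (c + s%:C *: w n)) <= (m + 1)^-1.
    by apply: (le_trans hz); rewrite ge_min lexx orbT.
  apply: (le_lt_trans (ler_wpM2l (ltW m0) h3)).
  by rewrite ltr_pdivrMr // mul1r; lra.
have e3 := cmod_ge_diff (ip (w n) c) ((r / 2 * m)%:C).
rewrite -e1 cmodR ger0_norm ?mulr_ge0 ?divr_ge0 ?(ltW r0) ?(ltW m0) // in e3.
have e4 := hK n.
have e6 : Kc <= `|Kc| by exact: ler_norm.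
have e7 := cmodD (ip (w n) z) (ip (w n) (c + s%:C *: w n) - ip (w n) z).
rewrite addrC subrK in e7.
have e8 : cmod (ip (w n) (c + s%:C *: w n) - ip (w n) z) < 1.
  by rewrite -cmodN opprB.
lra.
by rewrite invr_ge0.
Qed.

Lemma UBP (w : nat -> V) :
  (forall z, exists K, forall n, cmod (ip (w n) z) <= K) ->
  exists B, forall n, N (w n) <= B.
Proof.
move=> hw; apply: contrapT => nB.
have unb : forall B, exists n, B < N (w n).
  move=> B; apply: contrapT => h; apply: nB; exists B => n.
  by rewrite leNgt; apply/negP => hn; apply: h; exists n.
pose P (kc : nat * (V * R)) (c'r' : V * R) :=
  0 < kc.2.2 -> [/\ 0 < c'r'.2, c'r'.2 <= kc.2.2 / 2,
      c'r'.2 <= (kc.1.+1%:R)^-1, N (c'r'.1 - kc.2.1) <= kc.2.2 / 2 &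
      exists n, forall z, N (z - c'r'.1) <= c'r'.2 -> kc.1%:R < cmod (ip (w n) z)].
have hP : forall kc, exists c'r', P kc c'r'.
  move=> [k [c r]]; case: (ltrP 0 r) => r0.
    have [c' [r' h]] := @ubp_step w hw unb k c r r0.
    by exists (c', r').
  exists (0, 0); rewrite /P /= => h; exfalso; lra.
have [f hf] := choice hP.
pose fix st k := if k is k'.+1 then f (k', st k') else ((0 : V), (1 : R)).
have st_pos : forall k, 0 < (st k).2.
  elim=> [|k IH] /=; first exact: ltr01.
  by have [] := hf (k, st k) IH.
pose c k := (st k).1; pose r k := (st k).2.
have stP : forall k, [/\ 0 < r k.+1, r k.+1 <= r k / 2, r k.+1 <= (k.+1%:R)^-1,
    N (c k.+1 - c k) <= r k / 2 &
    exists n, forall z, N (z - c k.+1) <= r k.+1 -> k%:R < cmod (ip (w n) z)].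
  move=> k; exact: (hf (k, st k) (st_pos k)).
have nest : forall k j, N (c (j + k)%N - c k) + r (j + k)%N <= r k.
  move=> k; elim=> [|j IH]; first by rewrite add0n subrr N0 add0r.
  have [_ h1 _ h2 _] := stP (j + k)%N.
  have := ND (c (j + k).+1 - c (j + k)%N) (c (j + k)%N - c k).
  rewrite addrA subrK addSn; lra.
have rsmall : forall k, r k.+1 <= (k.+1%:R)^-1.
  by move=> k; have [] := stP k.
have cauchy : hcauchy ip c.
  move=> eps e0; have [K hK] := arch (2 / eps).
  exists K.+1 => m n hm hn.
  have h1 := nest K.+1 (m - K.+1)%N; have h2 := nest K.+1 (n - K.+1)%N.
  rewrite subnK // in h1; rewrite subnK // in h2.
  have h3 := NBle (c m - c K.+1) (c n - c K.+1).
  rewrite opprB addrA subrK in h3.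
  have rp1 := st_pos m; have rp2 := st_pos n.
  have h4 := rsmall K.
  have h5 : 2 * (K.+1%:R)^-1 < eps.
    rewrite ltr_pdivrMr ?ltr0n //; move: hK; rewrite ltr_pdivrMr // -natr1 => hK; nra.
  rewrite /r in h1 h2 h4; rewrite /c in h1 h2 h3 *; move: h4 h5; set t := (K.+1%:R)^-1 => h4 h5; lra.
have [l hl] := Hcompl _ cauchy.
have inball : forall k, N (l - c k.+1) <= r k.+1.
  move=> k; apply/ler_addgt0Pr => e e0.
  have [M hM] := hl e e0.
  pose n := (M + k.+1)%N.
  have h1 := hM n (leq_addr _ _).
  have h2 := nest k.+1 M; rewrite -/n in h2.
  have h3 := NBle (l - c n) (c k.+1 - c n).
  rewrite opprB addrA subrK in h3.
  have h4 : N (c k.+1 - c n) = N (c n - c k.+1) by rewrite NB.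
  have h5 : N (l - c n) = N (c n - l) by rewrite NB.
  have := st_pos n; rewrite /r in h2 *; lra.
have [Kl hKl] := hw l.
have [k hk] := arch Kl.
have [_ _ _ _ [n hn]] := stP k.
have h := hn _ (inball k).
have := hKl n; lra.
Qed.

Lemma small_eq0 (z : R[i]) : (forall eps, 0 < eps -> cmod z <= eps) -> z = 0.
Proof.
move=> h; apply: cmod_eq0; apply: le_anti; rewrite cmod_ge0 andbT.
apply/ler_addgt0Pr => e e0; rewrite add0r; exact: h.
Qed.

Lemma cmod_ip_le {x y a b} : N x <= a -> N y <= b -> cmod (ip x y) <= a * b.
Proof.
move=> hx hy; apply: (le_trans (CS x y)); apply: ler_pM => //; exact: N_ge0.
Qed.

Lemma ReN (z : R[i]) : complex.Re (- z) = - complex.Re z.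
Proof. by case: z. Qed.

Lemma par a b : N (a - b) ^+ 2 + N (a + b) ^+ 2 = 2 * N a ^+ 2 + 2 * N b ^+ 2.
Proof. rewrite Nsq_expand Nsq_expand NN ipNr ReN; lra. Qed.

Lemma two_neq0 : (2 : R[i]) != 0.
Proof. by rewrite pnatr_eq0. Qed.

Lemma cmod2 : cmod (2 : R[i]) = 2.
Proof.
have -> : (2 : R[i]) = (2 : R)%:C by rewrite rmorph_nat.
by rewrite cmodR ger0_norm.
Qed.

Lemma mid p q c : N (p - q) ^+ 2 + 4 * N (c - (2^-1 : R[i]) *: (p + q)) ^+ 2 =
  2 * N (c - p) ^+ 2 + 2 * N (c - q) ^+ 2.
Proof.
have e : (c - p) + (c - q) = (2 : R[i]) *: (c - (2^-1 : R[i]) *: (p + q)).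
  rewrite scalerBr scalerA mulfV ?two_neq0 // scale1r scaler_nat mulr2n.
  rewrite opprD !addrA; congr (_ - _); rewrite addrAC; congr (_ + _).
have := par (c - p) (c - q); rewrite e NZ cmod2.
have -> : c - p - (c - q) = - (p - q) by rewrite opprB addrC addrA subrK opprB.
rewrite NN; lra.
Qed.

Lemma Nsq_sub_scale p q (t : R[i]) : N (p - t *: q) ^+ 2 =
  N p ^+ 2 + cmod t ^+ 2 * N q ^+ 2 - 2 * complex.Re (conjc t * ip p q).
Proof. rewrite Nsq_expand NN NZ ipNr ipZr ReN; lra. Qed.

Definition rcv (a : nat -> R) (l : R) := forall eps, 0 < eps ->
  exists M, forall n, (M <= n)%N -> `|a n - l| < eps.

Lemma hcvg_ext {u u' : nat -> V} {l l'} : hcvg ip u l ->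
  (forall n, N (u' n - l') = N (u n - l)) -> hcvg ip u' l'.
Proof. by move=> h e eps e0; have [M hM] := h eps e0; exists M => n /hM; rewrite e. Qed.

Lemma rcv_N {u : nat -> V} {l} : hcvg ip u l -> rcv (fun n => N (u n)) (N l).
Proof.
move=> h eps e0; have [M hM] := h eps e0; exists M => n /hM.
exact: le_lt_trans (N_lip _ _).
Qed.

Lemma rcv_add {a b la lb} : rcv a la -> rcv b lb -> rcv (fun n => a n + b n) (la + lb).
Proof.
move=> ha hb eps e0; have e2 : 0 < eps / 2 by rewrite divr_gt0.
have [M1 h1] := ha _ e2; have [M2 h2] := hb _ e2.
exists (M1 + M2)%N => n hn.
have k1 := h1 n (leq_trans (leq_addr _ _) hn).
have k2 := h2 n (leq_trans (leq_addl _ _) hn).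
have := ler_normD (a n - la) (b n - lb).
have -> : a n - la + (b n - lb) = a n + b n - (la + lb) by ring.
lra.
Qed.

Lemma rcv_sq {a l} : rcv a l -> rcv (fun n => a n ^+ 2) (l ^+ 2).
Proof.
move=> ha eps e0.
have B0 : 0 < 1 + 2 * `|l| by have := normr_ge0 l; lra.
have d0 : 0 < Num.min 1 (eps / (1 + 2 * `|l|)) by rewrite lt_min ltr01 divr_gt0.
have [M hM] := ha _ d0; exists M => n /hM; rewrite lt_min => /andP[h1 h2].
have -> : a n ^+ 2 - l ^+ 2 = (a n - l) * (a n - l + 2 * l) by ring.
rewrite normrM.
have h3 : `|a n - l + 2 * l| <= 1 + 2 * `|l|.
  apply: (le_trans (ler_normD _ _)); rewrite normrM ger0_norm //; lra.
move: h2; rewrite ltr_pdivlMr // => h2.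
have h4 := normr_ge0 (a n - l); have h5 := normr_ge0 (a n - l + 2 * l).
nra.
Qed.

Lemma rcv_ge {a l d} : (forall n, d <= a n) -> rcv a l -> d <= l.
Proof.
move=> h ha; rewrite leNgt; apply/negP => ld.
have dl0 : 0 < d - l by lra.
have [M hM] := ha (d - l) dl0.
have := hM M (leqnn M); have := h M; rewrite ltr_norml; lra.
Qed.

Lemma rcv_le {a l d} : (forall n, a n <= d + (n.+1%:R)^-1) -> rcv a l -> l <= d.
Proof.
move=> h ha; rewrite leNgt; apply/negP => ld.
have dl0 : 0 < (l - d) / 2 by rewrite divr_gt0 // subr_gt0.
have [M hM] := ha ((l - d) / 2) dl0.
have [K hK] := arch (2 / (l - d)).
have hn := hM (M + K)%N (leq_addr _ _).
have hi : ((M + K).+1%:R)^-1 < (l - d) / 2.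
  rewrite -[X in _ < X]invrK ltf_pV2 ?posrE ?ltr0n ?divr_gt0 ?subr_gt0 //.
  rewrite invf_div (lt_le_trans hK) // ler_nat; apply: leqW; exact: leq_addl.
  by rewrite invr_gt0.
have h2 : d + ((M + K).+1%:R)^-1 < d + (l - d) / 2 by rewrite ltrD2l.
have h1 := le_lt_trans (h (M + K)%N) h2.
move: hn; rewrite ltr_norml; lra.
Qed.

Lemma quad {b Q} : 0 <= Q -> (forall s : R, 2 * s * b <= s ^+ 2 * Q) -> b = 0.
Proof.
move=> hQ h; pose u := (Q + 1)^-1.
have u0 : 0 < u by rewrite /u invr_gt0; lra.
have hu : u * (Q + 1) = 1 by rewrite /u mulVf //; lra.
have := h (b * u).
have : 0 <= b ^+ 2 by exact: sqr_ge0.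
move=> hb2 hh.
have : b ^+ 2 * u <= 0 by nra.
move=> hh2; have : b ^+ 2 <= 0 by nra.
by move=> hh3; apply/eqP; rewrite -sqrf_eq0 eq_le hh3 sqr_ge0.
Qed.

Lemma inv_small {eps : R} : 0 < eps -> exists K, forall m, (K <= m)%N -> (m.+1%:R)^-1 < eps.
Proof.
move=> e0; have [K hK] := arch eps^-1; exists K => m hm.
rewrite -[X in _ < X]invrK ltf_pV2 ?posrE ?ltr0n ?invr_gt0 //.
apply: (lt_le_trans hK); rewrite ler_nat; exact: leqW.
Qed.

Lemma cauchy_of_bound (u : nat -> V) :
  (forall m n, N (u m - u n) ^+ 2 <= 2 * (m.+1%:R)^-1 + 2 * (n.+1%:R)^-1) -> hcauchy ip u.
Proof.
move=> h eps e0.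
have e2 : 0 < eps ^+ 2 / 4 by rewrite divr_gt0 // exprn_gt0.
have [K hK] := inv_small e2; exists K => m n hm hn.
have := h m n; have := hK m hm; have := hK n hn.
move: ((m.+1%:R : R)^-1) ((n.+1%:R : R)^-1) => a b ha hb hab.
rewrite -(ltr_pXn2r (n := 2)) ?nnegrE ?N_ge0 ?(ltW e0) //; lra.
Qed.

Lemma ReMR (s : R) (a : R[i]) : complex.Re (conjc (s%:C) * a) = s * complex.Re a.
Proof. case: a => a1 a2 /=; ring. Qed.

Lemma ReMI (s : R) (a : R[i]) :
  complex.Re (conjc (s%:C * 'i) * a) = s * complex.Im a.
Proof. case: a => a1 a2 /=; ring. Qed.

Lemma cmodRI (s : R) : cmod (s%:C * 'i) ^+ 2 = s ^+ 2.
Proof. rewrite /cmod sqr_sqrtr /=; [ring | nra]. Qed.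

Lemma cmodR2 (s : R) : cmod (s%:C) ^+ 2 = s ^+ 2.
Proof. by rewrite cmodR real_normK // num_real. Qed.

Lemma complex_sum_eq0 (a b : R[i]) : complex.Re a + complex.Re b = 0 ->
  complex.Im a + complex.Im b = 0 -> a + b = 0.
Proof. case: a => a1 a2; case: b => b1 b2 /= h1 h2; by apply/eqP; rewrite eq_complex /= h1 h2 !eqxx. Qed.

Definition ccv (a : nat -> R[i]) (l : R[i]) := forall eps, 0 < eps ->
  exists M, forall n, (M <= n)%N -> cmod (a n - l) < eps.

Lemma sum_ge_term (f : nat -> R) (K n : nat) : (forall i, 0 <= f i) -> (n < K)%N ->
  f n <= \sum_(i < K) f i.
Proof.
move=> f0; elim: K => [|K IH] //; rewrite ltnS leq_eqVlt => /orP[/eqP ->|hn].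
  by rewrite big_ord_recr /= lerDr sumr_ge0.
by rewrite big_ord_recr /= (le_trans (IH hn)) // lerDl.
Qed.

Lemma ccv_bounded {a l} : ccv a l -> exists K, forall n, cmod (a n) <= K.
Proof.
move=> h; have [M hM] := h 1 ltr01.
exists (\sum_(i < M) cmod (a i) + cmod l + 1) => n.
have s0 : 0 <= \sum_(i < M) cmod (a i) by apply: sumr_ge0 => i _; exact: cmod_ge0.
case: (ltnP n M) => hn.
  have := @sum_ge_term (fun i => cmod (a i)) M n (fun i => cmod_ge0 _) hn.
  have := cmod_ge0 l; lra.
have := hM n hn; have := cmodD (a n - l) l; rewrite subrK; lra.
Qed.

Lemma ccv_sum0 {a b la lb} : ccv a la -> ccv b lb -> (forall n, a n + b n = 0) ->
  la + lb = 0.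
Proof.
move=> ha hb hab; apply: small_eq0 => e e0.
have e2 : 0 < e / 2 by rewrite divr_gt0.
have [M1 h1] := ha _ e2; have [M2 h2] := hb _ e2.
have k1 := h1 (M1 + M2)%N (leq_addr _ _); have k2 := h2 (M1 + M2)%N (leq_addl _ _).
have -> : la + lb = - ((a (M1 + M2)%N - la) + (b (M1 + M2)%N - lb)).
  have := hab (M1 + M2)%N; move: (a _) (b _) => x1 x2 hx; rewrite -[RHS]add0r -hx.
  by rewrite opprD !opprB; ring.
rewrite cmodN; have := cmodD (a (M1 + M2)%N - la) (b (M1 + M2)%N - lb); lra.
Qed.

Variables (A Abar Astar A0 A0bar : op V).
Hypotheses (HAlin : linear_op A) (HAdense : densely_defined ip A)
  (HAbar : is_closure ip A Abar) (HAstar : is_adjoint ip A Astar)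
  (HA0lin : linear_op A0) (HA0sub : op_sub A0 Astar)
  (HA0bar : is_closure ip A0 A0bar).

Lemma dom_sub {x} : dom A x -> dom Abar x /\ app Abar x = app A x.
Proof.
move=> hx; apply/HAbar => e e0; exists x; split => //.
by rewrite !subrr N0.
Qed.

Lemma adj_bar x y : dom Abar x -> dom Astar y ->
  ip (app Abar x) y = ip x (app Astar y).
Proof.
move=> hx hy; apply/eqP; rewrite -subr_eq0; apply/eqP/small_eq0 => e e0.
have gc : in_graph_closure ip A x (app Abar x) by apply/HAbar.
have adj := proj1 (HAstar y (app Astar y)) (conj hy erefl).
set B := N y + N (app Astar y) + 1.
have B0 : 0 < B by rewrite /B; have := N_ge0 y; have := N_ge0 (app Astar y); lra.
have [u [hu [h1 h2]]] := gc (e / B) (divr_gt0 e0 B0).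
have -> : ip (app Abar x) y - ip x (app Astar y) =
    ip (app Abar x - app A u) y + ip (u - x) (app Astar y).
  by rewrite ipBl ipBl (adj u hu); ring.
have k1 := cmod_ip_le (ltW h2) (lexx (N y)).
have h1' : N (u - x) < e / B by rewrite NB.
have k2 := cmod_ip_le (ltW h1') (lexx (N (app Astar y))).
apply: (le_trans (cmodD _ _)).
have : e / B * N y + e / B * N (app Astar y) <= e.
  rewrite -mulrDr mulrAC ler_pdivrMr // /B; nra.
lra.
Qed.

Lemma A0bar_sub : op_sub A0bar Astar.
Proof.
move=> x hx; set z := app A0bar x.
have gc : in_graph_closure ip A0 x z by apply/HA0bar.
suff : dom Astar x /\ app Astar x = z by [].
apply/HAstar => a ha.
apply/eqP; rewrite -subr_eq0; apply/eqP/small_eq0 => e e0.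
set B := N (app A a) + N a + 1.
have B0 : 0 < B by rewrite /B; have := N_ge0 a; have := N_ge0 (app A a); lra.
have [u [hu [h1 h2]]] := gc (e / B) (divr_gt0 e0 B0).
have [hsu esu] := HA0sub _ hu.
have adj := proj1 (HAstar u (app Astar u)) (conj hsu erefl) a ha.
rewrite esu in adj.
have -> : ip (app A a) x - ip a z = ip (app A a) (x - u) - ip a (z - app A0 u).
  by rewrite !ipBr adj; ring.
have k1 := cmod_ip_le (lexx (N (app A a))) (ltW h1).
have k2 := cmod_ip_le (lexx (N a)) (ltW h2).
apply: (le_trans (cmodB _ _)).
have : N (app A a) * (e / B) + N a * (e / B) <= e.
  rewrite -mulrDl mulrA ler_pdivrMr // -subr_ge0 /B; nra.
lra.
Qed.

Lemma Astar_sub {y1 y2} : dom Astar y1 -> dom Astar y2 ->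
  dom Astar (y1 - y2) /\ app Astar (y1 - y2) = app Astar y1 - app Astar y2.
Proof.
move=> h1 h2; apply/HAstar => x hx.
have a1 := proj1 (HAstar y1 _) (conj h1 erefl) x hx.
have a2 := proj1 (HAstar y2 _) (conj h2 erefl) x hx.
by rewrite !ipBr a1 a2.
Qed.

Lemma A0_lin_comb {z1 z2} (t : R[i]) : dom A0 z1 -> dom A0 z2 ->
  dom A0 (z1 + t *: z2) /\ app A0 (z1 + t *: z2) = app A0 z1 + t *: app A0 z2.
Proof.
case: HA0lin => _ hadd hsc h1 h2.
have [s1 s2] := hsc t z2 h2.
have [a1 a2] := hadd z1 (t *: z2) h1 s1.
by split => //; rewrite a2 s2.
Qed.

Lemma A0_mid {z1 z2} : dom A0 z1 -> dom A0 z2 ->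
  dom A0 ((2^-1 : R[i]) *: (z1 + z2)) /\
  app A0 ((2^-1 : R[i]) *: (z1 + z2)) = (2^-1 : R[i]) *: (app A0 z1 + app A0 z2).
Proof.
case: HA0lin => _ hadd hsc h1 h2.
have [a1 a2] := hadd z1 z2 h1 h2.
have [s1 s2] := hsc (2^-1) (z1 + z2) a1.
by split => //; rewrite s2 a2.
Qed.

Lemma proj y : dom Astar y -> exists y0, dom A0bar y0 /\
  forall z, dom A0 z -> ip (y - y0) z + ip (app Astar (y - y0)) (app A0 z) = 0.
Proof.
move=> hy; set Ay := app Astar y.
pose D z := N (y - z) ^+ 2 + N (Ay - app A0 z) ^+ 2.
pose E : set R := fun t => exists2 z, dom A0 z & t = D z.
have D0 z : 0 <= D z by rewrite /D addr_ge0 // sqr_ge0.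
have A00 : dom A0 0 by case: HA0lin.
have hinf : has_inf E.
  split; first by exists (D 0), 0.
  by exists 0 => t [z _ ->].
set d := inf E.
have dle z : dom A0 z -> d <= D z.
  by move=> hz; apply: (ge_inf (proj2 hinf)); exists z.
have mins k : exists z, dom A0 z /\ D z < d + (k.+1%:R)^-1.
  have k0 : 0 < (k.+1%:R : R)^-1 by rewrite invr_gt0 ltr0Sn.
  have [t [z hz ->] ht] := inf_adherent k0 hinf.
  by exists z.
have [zs hzs] := choice mins.
have zdom k : dom A0 (zs k) by case: (hzs k).
have zlt k : D (zs k) < d + (k.+1%:R)^-1 by case: (hzs k).
have key m n : N (zs m - zs n) ^+ 2 + N (app A0 (zs m) - app A0 (zs n)) ^+ 2
    <= 2 * (m.+1%:R)^-1 + 2 * (n.+1%:R)^-1.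
  have [hm ehm] := A0_mid (zdom m) (zdom n).
  have k1 := mid (zs m) (zs n) y.
  have k2 := mid (app A0 (zs m)) (app A0 (zs n)) Ay.
  rewrite -ehm in k2.
  have k3 := dle _ hm.
  have k4 := zlt m; have k5 := zlt n.
  rewrite /D in k3 k4 k5.
  move: k1 k2 k3 k4 k5; set i1 := (m.+1%:R)^-1; set i2 := (n.+1%:R)^-1.
  move=> k1 k2 k3 k4 k5; lra.
have c1 : hcauchy ip zs.
  apply: cauchy_of_bound => m n; have := key m n.
  have := sqr_ge0 (N (app A0 (zs m) - app A0 (zs n))).
  move: ((m.+1%:R : R)^-1) ((n.+1%:R : R)^-1) => a b; lra.
have c2 : hcauchy ip (fun k => app A0 (zs k)).
  apply: cauchy_of_bound => m n; have := key m n.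
  have := sqr_ge0 (N (zs m - zs n)).
  move: ((m.+1%:R : R)^-1) ((n.+1%:R : R)^-1) => a b; lra.
have [y0 hy0] := Hcompl _ c1.
have [w hw] := Hcompl _ c2.
have gc : in_graph_closure ip A0 y0 w.
  move=> e e0; have [M1 h1] := hy0 e e0; have [M2 h2] := hw e e0.
  exists (zs (M1 + M2)%N); split; first exact: zdom.
  rewrite NB (NB w); split; [apply: h1; exact: leq_addr | apply: h2; exact: leq_addl].
have [hy0b ey0b] := proj2 (HA0bar y0 w) gc.
have [hy0s ey0s] := A0bar_sub _ hy0b.
rewrite ey0b in ey0s.
exists y0; split => //.
have [hy1 ey1] := Astar_sub hy hy0s.
rewrite ey1 ey0s -/Ay.
set y1 := y - y0; set v := Ay - w.
have cv1 : hcvg ip (fun k => y - zs k) y1.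
  by apply: (hcvg_ext hy0) => k; rewrite subsub NN.
have cv2 : hcvg ip (fun k => Ay - app A0 (zs k)) v.
  by apply: (hcvg_ext hw) => k; rewrite subsub NN.
have G0 : N y1 ^+ 2 + N v ^+ 2 <= d.
  apply: (rcv_le (a := fun k => D (zs k))).
    by move=> k; apply: ltW.
  exact: rcv_add (rcv_sq (rcv_N cv1)) (rcv_sq (rcv_N cv2)).
have Gt (t : R[i]) z : dom A0 z ->
    d <= N (y1 - t *: z) ^+ 2 + N (v - t *: app A0 z) ^+ 2.
  move=> hz.
  have cv3 : hcvg ip (fun k => y - (zs k + t *: z)) (y1 - t *: z).
    by apply: (hcvg_ext hy0) => k; rewrite subsub2 NN.
  have cv4 : hcvg ip (fun k => Ay - (app A0 (zs k) + t *: app A0 z)) (v - t *: app A0 z).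
    by apply: (hcvg_ext hw) => k; rewrite subsub2 NN.
  apply: (rcv_ge (a := fun k => N (y - (zs k + t *: z)) ^+ 2 +
      N (Ay - (app A0 (zs k) + t *: app A0 z)) ^+ 2)).
    move=> k; have [h1 h2] := A0_lin_comb t (zdom k) hz.
    by rewrite -h2; exact: dle _ h1.
  exact: rcv_add (rcv_sq (rcv_N cv3)) (rcv_sq (rcv_N cv4)).
move=> z hz.
set Q := N z ^+ 2 + N (app A0 z) ^+ 2.
have Q0 : 0 <= Q by rewrite /Q addr_ge0 // sqr_ge0.
have ineq t : 2 * complex.Re (conjc t * ip y1 z) + 2 * complex.Re (conjc t * ip v (app A0 z))
    <= cmod t ^+ 2 * Q.
  have := Gt t z hz; rewrite !Nsq_sub_scale /Q; lra.
apply: complex_sum_eq0.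
  apply: (quad Q0) => s; have := ineq (s%:C); rewrite !ReMR cmodR2; lra.
apply: (quad Q0) => s; have := ineq (s%:C * 'i); rewrite !ReMI cmodRI; lra.
Qed.

Lemma dense_bar x {e} : 0 < e -> exists u, dom Abar u /\ N (x - u) < e.
Proof.
move=> e0; have [u [hu h]] := HAdense x e e0; exists u; split => //.
by case: (dom_sub hu).
Qed.

Lemma norm_bound u B0 : 0 <= B0 ->
  (forall x, dom Abar x -> cmod (ip x u) <= B0 * N x) -> N u <= B0.
Proof.
move=> B00 h.
have key : N u ^+ 2 <= B0 * N u.
  apply/ler_addgt0Pr => e e0.
  set c := B0 + N u + 1.
  have c0 : 0 < c by rewrite /c; have := N_ge0 u; lra.
  have [x [hx hxu]] := dense_bar u (divr_gt0 e0 c0).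
  have k1 := h x hx.
  have k2 := cmod_ip_le (ltW hxu) (lexx (N u)).
  have k3 := cmodD (ip x u) (ip (u - x) u).
  rewrite -ipDl addrC subrK in k3.
  have k4 : N u ^+ 2 <= cmod (ip u u) by rewrite ipxx cmodR ler_norm.
  have k5 := ND u (x - u); rewrite addrC subrK in k5.
  have k6 : N x <= N u + e / c by rewrite NB in hxu; lra.
  have k7 : B0 * N x <= B0 * (N u + e / c) by exact: ler_wpM2l.
  have k8 : e / c * (B0 + N u) <= e.
    rewrite mulrAC ler_pdivrMr // /c; nra.
  nra.
have := N_ge0 u; nra.
Qed.

Lemma weak_ext {u : nat -> V} {v B} : (forall n, N (u n) <= B) ->
  (forall x, dom Abar x -> ccv (fun n => ip x (u n)) (ip x v)) ->
  ccv (fun n => ip v (u n)) (ip v v).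
Proof.
move=> hB hx eps e0.
set c := B + N v + 1.
have c0 : 0 < c by rewrite /c; have := N_ge0 v; have := le_trans (N_ge0 _) (hB 0%N); lra.
have e3 : 0 < eps / 3 by rewrite divr_gt0.
have [x [hdx hxv]] := dense_bar v (divr_gt0 e3 c0).
have [M hM] := hx x hdx (eps / 3) e3.
exists M => n hn.
have -> : ip v (u n) - ip v v =
    ip (v - x) (u n) + (ip x (u n) - ip x v) + ip (x - v) v.
  by rewrite !ipBl; ring.
have k1 := cmod_ip_le (ltW hxv) (hB n).
have hxv' : N (x - v) < eps / 3 / c by rewrite NB.
have k2 := cmod_ip_le (ltW hxv') (lexx (N v)).
have k3 := hM n hn.
have k4 := cmodD (ip (v - x) (u n) + (ip x (u n) - ip x v)) (ip (x - v) v).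
have k5 := cmodD (ip (v - x) (u n)) (ip x (u n) - ip x v).
have k6 : eps / 3 / c * B + eps / 3 / c * N v <= eps / 3.
  rewrite -mulrDr mulrAC ler_pdivrMr // /c; have := N_ge0 v; nra.
lra.
Qed.

Variables (T Tstar : nat -> V -> V).
Hypotheses
  (HTstar : forall n x y, ip (T n x) y = ip x (Tstar n y))
  (HWOT : forall x y eps, 0 < eps ->
     exists N, forall n, (N <= n)%N -> cmod (ip (T n x) y - ip x y) < eps)
  (HRT : forall n x, dom Abar (T n x))
  (HRTstar : forall n x, dom A0bar (Tstar n x))
  (Hcomm : exists M : R, forall n f, dom Abar f -> dom Abar (T n f) ->
     hnorm ip (app Abar (T n f) - T n (app Abar f)) <= M * hnorm ip f).

Lemma main : op_eq A0bar Astar.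
Proof.
split; first exact: A0bar_sub.
move=> y hy.
have [y0 [hy0b orth]] := proj _ hy.
have [hy0s ey0s] := A0bar_sub _ hy0b.
have [hy1 ey1] := Astar_sub hy hy0s.
set y1 := y - y0 in orth hy1 ey1.
set v := app Astar y1 in orth ey1 *.
have orth' z : dom A0bar z -> ip y1 z + ip v (app A0bar z) = 0.
  move=> hz; have gc : in_graph_closure ip A0 z (app A0bar z) by apply/HA0bar.
  apply: small_eq0 => e e0.
  set c := N y1 + N v + 1.
  have c0 : 0 < c by rewrite /c; have := N_ge0 y1; have := N_ge0 v; lra.
  have [u [hu [h1 h2]]] := gc (e / c) (divr_gt0 e0 c0).
  have -> : ip y1 z + ip v (app A0bar z) =
      ip y1 (z - u) + ip v (app A0bar z - app A0 u).
    by rewrite !ipBr; move: (orth u hu); move: (ip y1 u) (ip v (app A0 u)) => p q hpq;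
       rewrite -[LHS]subr0 -hpq; ring.
  have k1 := cmod_ip_le (lexx (N y1)) (ltW h1).
  have k2 := cmod_ip_le (lexx (N v)) (ltW h2).
  have k3 := cmodD (ip y1 (z - u)) (ip v (app A0bar z - app A0 u)).
  have k4 : N y1 * (e / c) + N v * (e / c) <= e.
    rewrite -mulrDl mulrA ler_pdivrMr // /c; nra.
  lra.
pose zn n := Tstar n y1.
have hzn n : dom Astar (zn n) /\ app Astar (zn n) = app A0bar (zn n).
  exact: A0bar_sub _ (HRTstar n y1).
have s1 : ccv (fun n => ip y1 (zn n)) (ip y1 y1).
  move=> e e0; have [M hM] := HWOT y1 y1 e e0; exists M => n hn.
  by rewrite /zn -HTstar; exact: hM.
have [Bv hBv] : exists B, forall n, N (Tstar n v) <= B.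
  apply: UBP => z.
  have cz : ccv (fun n => ip (T n z) v) (ip z v).
    by move=> e e0; have [M hM] := HWOT z v e e0; exists M => n hn; exact: hM.
  have [K hK] := ccv_bounded cz; exists K => n.
  by rewrite ipC -HTstar cmodJ.
have [M hM] := Hcomm.
set B0 := Bv + `|M| * N y1.
have B00 : 0 <= B0.
  rewrite /B0 addr_ge0 ?mulr_ge0 ?N_ge0 //; exact: le_trans (N_ge0 _) (hBv 0%N).
have bound n : N (app Astar (zn n)) <= B0.
  apply: norm_bound => // x hx.
  have [hzs _] := hzn n.
  rewrite -adj_bar // /zn -HTstar.
  set C := app Abar (T n x) - T n (app Abar x).
  have eC : T n (app Abar x) = app Abar (T n x) - C by rewrite /C opprB addrC subrK.
  rewrite eC ipBl adj_bar // -/v HTstar.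
  have k1 := cmodB (ip x (Tstar n v)) (ip C y1).
  have k2 := cmod_ip_le (lexx (N x)) (hBv n).
  have k3 := hM n x hx (HRT n x).
  have k4 : N C <= `|M| * N x by apply: (le_trans k3); apply: ler_wpM2r; [exact: N_ge0 | exact: ler_norm].
  have k5 := cmod_ip_le k4 (lexx (N y1)).
  have k6 : N x * Bv + `|M| * N x * N y1 = B0 * N x by rewrite /B0; ring.
  lra.
have s2 : ccv (fun n => ip v (app Astar (zn n))) (ip v v).
  apply: (weak_ext bound) => x hx e e0.
  have [M' hM'] := HWOT (app Abar x) y1 e e0; exists M' => n hn.
  have [hzs _] := hzn n.
  rewrite -adj_bar // /zn -HTstar -adj_bar //; exact: hM'.
have s3 : ip y1 y1 + ip v v = 0.
  apply: (ccv_sum0 s1 s2) => n; have [_ e] := hzn n; rewrite e; exact: orth' (HRTstar n y1).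
have y10 : y1 = 0.
  apply: N_eq0; move: s3; rewrite !ipxx -rmorphD /= => /complexI.
  have := sqr_ge0 (N y1); have := sqr_ge0 (N v); have := N_ge0 y1; nra.
have yy0 : y = y0 by apply/eqP; rewrite -subr_eq0; apply/eqP.
rewrite yy0; split => //.
Qed.

End IP.

Theorem theorem1 (R : realType) (V : lmodType R[i]) (ip : V -> V -> R[i])
  (Hip : is_inner_product ip) (Hcompl : hcomplete ip)
  (A Abar Astar A0 A0bar : op V)
  (HAlin : linear_op A) (HAdense : densely_defined ip A)
  (HAbar : is_closure ip A Abar) (HAstar : is_adjoint ip A Astar)
  (HA0lin : linear_op A0) (HA0sub : op_sub A0 Astar)
  (HA0bar : is_closure ip A0 A0bar)
  (T Tstar : nat -> V -> V)
  (HT : forall n, bounded_op ip (T n))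
  (HTstar : forall n x y, ip (T n x) y = ip x (Tstar n y))
  (HWOT : forall x y eps, 0 < eps ->
     exists N, forall n, (N <= n)%N -> cmod (ip (T n x) y - ip x y) < eps)
  (HRT : forall n x, dom Abar (T n x))
  (HRTstar : forall n x, dom A0bar (Tstar n x))
  (Hcomm : exists M : R, forall n f, dom Abar f -> dom Abar (T n f) ->
     hnorm ip (app Abar (T n f) - T n (app Abar f)) <= M * hnorm ip f) :
  op_eq A0bar Astar.
Proof.
exact: (@main R V ip Hip Hcompl A Abar Astar A0 A0bar HAdense HAbar HAstar
  HA0lin HA0sub HA0bar T Tstar HTstar HWOT HRT HRTstar Hcomm).
Qed.
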